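(* Let $m>0$ and $a_1,a_2\in(-\infty,4m^2)$. For every $b_2\in\mathbb{R}$ there exist $b_0,b_1\in\mathbb{R}$ such that the equation $$\gamma(a_1-\gamma)(a_2-\gamma)J(\gamma)=b_0+b_1\gamma+b_2\gamma^2$$ admits three distinct real solutions $\gamma_0,\gamma_1,\gamma_2\in(-\infty,4m^2)$.
   Context: $\rho(M)=\frac{1}{16\pi^2}\sqrt{1-\frac{4m^2}{M}}\frac1M$ for $M\ge4m^2$, and $J(\gamma)=\int_{4m^2}^\infty\frac{\rho(M)}{M-\gamma}dM$ for $\gamma<4m^2$. *)

(* Defs.v *)
From Stdlib Require Import Reals.
From Coquelicot Require Import Coquelicot.
Open Scope R_scope.

Definition rho (m M : R) : R :=
  / (16 * PI ^ 2) * sqrt (1 - 4 * m ^ 2 / M) * / M.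

Definition J (m gamma : R) : R :=
  RInt_gen (fun M => rho m M / (M - gamma))
           (at_point (4 * m ^ 2)) (Rbar_locally p_infty).

(* Main.v *)
Require Import Defs.
From Stdlib Require Import Reals Lra Psatz.
From Coquelicot Require Import Coquelicot.
Open Scope R_scope.

Definition hh (c g v : R) := 2*v^2/(c - g*(1-v^2)).
Definition II (c g : R) := RInt (hh c g) 0 1.

Lemma den_pos c g v : 0 < c -> g < c -> 0 <= v^2 <= 1 ->
  0 < Rmin c (c-g) /\ Rmin c (c-g) <= c - g*(1-v^2).
Proof.
  intros Hc Hg Hv. unfold Rmin; destruct (Rle_dec c (c-g)); split; try lra;
  destruct (Rle_dec 0 g); nra.
Qed.

Lemma hh_cont c g v : 0 < c -> g < c -> 0 <= v^2 <= 1 -> continuous (hh c g) v.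
Proof.
  intros Hc Hg Hv. apply (ex_derive_continuous (K:=R_AbsRing) (V:=R_NormedModule)). unfold hh.
  destruct (den_pos c g v Hc Hg Hv).
  auto_derive. lra.
Qed.

Lemma hh_ex c g a b : 0 < c -> g < c -> 0 <= a -> a <= b -> b <= 1 -> ex_RInt (hh c g) a b.
Proof.
  intros. apply (ex_RInt_continuous (V:=R_CompleteNormedModule)). intros z Hz.
  rewrite Rmin_left in Hz by lra. rewrite Rmax_right in Hz by lra.
  apply hh_cont; auto. split; nra.
Qed.
Definition fJ (K c g M : R) := K * sqrt (1 - c/M) * /M / (M-g).

Lemma fJ_cont K c g M : 0 < c -> g < c -> c <= M -> continuous (fJ K c g) M.
Proof.
  intros Hc Hg HM. apply continuity_pt_filterlim. unfold fJ.
  apply continuity_pt_div.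
  - apply continuity_pt_mult.
    + apply continuity_pt_mult. apply continuity_pt_const. intros ? ?; auto.
      apply (continuity_pt_comp (fun M => 1 - c/M) sqrt).
      * apply continuity_pt_minus. apply continuity_pt_const. intros ? ?; auto.
        apply continuity_pt_div. apply continuity_pt_const. intros ? ?; auto.
        apply continuity_pt_id. lra.
      * apply continuity_pt_sqrt.
        assert (c/M <= 1). { apply (Rmult_le_reg_r M); [lra|]. unfold Rdiv. rewrite Rmult_assoc, Rinv_l by lra. lra. } lra.
    + apply continuity_pt_inv. apply continuity_pt_id. lra.
  - apply continuity_pt_minus. apply continuity_pt_id. apply continuity_pt_const. intros ? ?; auto.
  - lra.
Qed.

Lemma cov K c g w : 0 < c -> g < c -> 0 <= w < 1 ->
  RInt (fJ K c g) c (c/(1-w^2)) = RInt (fun v => K * hh c g v) 0 w.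
Proof.
  intros Hc Hg Hw.
  assert (E0 : c = c/(1-0^2)) by (field; lra).
  rewrite E0 at 2.
  rewrite <- (RInt_comp (V:=R_CompleteNormedModule) (fJ K c g) (fun v => c/(1-v^2)) (fun v => 2*c*v/(1-v^2)^2)).
  - apply RInt_ext. intros x Hx.
    rewrite Rmin_left in Hx by lra. rewrite Rmax_right in Hx by lra.
    assert (Hx1 : 0 < 1 - x^2) by nra.
    destruct (den_pos c g x Hc Hg) as [Hm1 Hm2]. nra.
    change (scal (2*c*x/(1-x^2)^2) (fJ K c g (c/(1-x^2)))) with ((2*c*x/(1-x^2)^2) * fJ K c g (c/(1-x^2))).
    unfold fJ, hh.
    replace (1 - c / (c / (1 - x ^ 2))) with (x^2) by (field; lra).
    rewrite <- (Rsqr_pow2 x), sqrt_Rsqr by lra.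
    rewrite Rsqr_pow2. match goal with |- ?a = ?b => change (@eq R a b) end.
    assert (Hd : c / (1 - x ^ 2) - g <> 0).
    { replace (c / (1 - x ^ 2) - g) with ((c - g*(1-x^2))/(1-x^2)) by (field; lra).
      apply Rgt_not_eq. apply Rdiv_lt_0_compat; lra. }
    field. repeat split; lra.
  - intros x Hx. rewrite Rmin_left in Hx by lra. rewrite Rmax_right in Hx by lra.
    apply fJ_cont; auto.
    apply (Rmult_le_reg_r (1-x^2)). nra. unfold Rdiv. rewrite Rmult_assoc, Rinv_l by nra. nra.
  - intros x Hx. rewrite Rmin_left in Hx by lra. rewrite Rmax_right in Hx by lra.
    assert (Hx1 : 0 < 1 - x^2) by nra.
    split.
    + auto_derive. nra. field. lra.
    + assert (H: ex_derive (fun v => 2*c*v/(1-v^2)^2) x). auto_derive. nra. exact (ex_derive_continuous _ _ H).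
Qed.

Lemma hh_bounds c g v : 0 < c -> g < c -> 0 <= v <= 1 ->
  0 <= hh c g v <= 2 / Rmin c (c-g).
Proof.
  intros Hc Hg Hv. destruct (den_pos c g v Hc Hg) as [H1 H2]. nra.
  unfold hh, Rdiv. split.
  - apply Rmult_le_pos. nra. left; apply Rinv_0_lt_compat; lra.
  - apply Rmult_le_compat. nra. left; apply Rinv_0_lt_compat; lra. nra.
    apply Rinv_le_contravar; lra.
Qed.

Lemma sqrt_ge_self x : 0 <= x <= 1 -> x <= sqrt x.
Proof.
  intros Hx. pose proof (sqrt_sqrt x (proj1 Hx)). pose proof (sqrt_pos x).
  assert (sqrt x <= 1). { rewrite <- sqrt_1. apply sqrt_le_1_alt. lra. } nra.
Qed.

Lemma Kh_ex K c g a b : 0 < c -> g < c -> 0 <= a -> a <= b -> b <= 1 ->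
  ex_RInt (fun v => K * hh c g v) a b.
Proof.
  intros. apply (ex_RInt_scal (V:=R_NormedModule) (hh c g) a b K). apply hh_ex; auto.
Qed.

Lemma Jrep K c g : 0 < K -> 0 < c -> g < c ->
  RInt_gen (fJ K c g) (at_point c) (Rbar_locally p_infty) = K * II c g.
Proof.
  intros HK Hc Hg.
  set (mu := Rmin c (c-g)).
  assert (Hmu : 0 < mu). { destruct (den_pos c g 0 Hc Hg) as [H _]; [simpl; lra| exact H]. }
  set (B := K * (2/mu)).
  assert (HB : 0 < B). { unfold B. apply Rmult_lt_0_compat; auto. unfold Rdiv; apply Rmult_lt_0_compat; [lra| apply Rinv_0_lt_compat; lra]. }
  assert (KI : K * II c g = RInt (fun v => K * hh c g v) 0 1).
  { unfold II. symmetry. apply (RInt_scal (V:=R_CompleteNormedModule) (hh c g) 0 1 K). apply hh_ex; lra. }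
  assert (Est : forall b, c < b -> Rabs (RInt (fJ K c g) c b - K * II c g) <= B * (c/b)).
  { intros b Hb.
    assert (Hcb : 0 < c/b < 1). { split. apply Rdiv_lt_0_compat; lra.
      apply (Rmult_lt_reg_r b). lra. unfold Rdiv. rewrite Rmult_assoc, Rinv_l by lra. lra. }
    set (w := sqrt (1 - c/b)).
    assert (Hw0 : 0 <= w) by apply sqrt_pos.
    assert (Hw1 : w < 1). { unfold w. assert (H: sqrt (1-c/b) < sqrt 1) by (apply sqrt_lt_1; lra). rewrite sqrt_1 in H. exact H. }
    assert (Hw2 : w^2 = 1 - c/b). { unfold w. simpl. rewrite Rmult_1_r. apply sqrt_sqrt. lra. }
    assert (Hw3 : 1 - w <= c/b). { pose proof (sqrt_ge_self (1 - c/b)). unfold w. lra. }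
    assert (Eb : c / (1 - w^2) = b). { rewrite Hw2. field. split; lra. }
    rewrite <- Eb at 1. rewrite cov by (auto; lra). rewrite KI.
    rewrite <- (RInt_Chasles (V:=R_CompleteNormedModule) (fun v => K * hh c g v) 0 w 1)
      by (apply Kh_ex; lra).
    change (plus ?a ?b) with (a + b).
    replace (RInt (fun v : R => K * hh c g v) 0 w - (RInt (fun v : R => K * hh c g v) 0 w + RInt (fun v : R => K * hh c g v) w 1))
      with (- RInt (fun v : R => K * hh c g v) w 1) by ring.
    rewrite Rabs_Ropp.
    apply Rle_trans with ((1 - w) * B).
    - apply abs_RInt_le_const. lra. apply Kh_ex; lra.
      intros t Ht. destruct (hh_bounds c g t Hc Hg) as [h1 h2]. lra.
      rewrite Rabs_pos_eq by nra. unfold B. fold mu in h2. nra.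
    - nra. }
  apply is_RInt_gen_unique.
  unfold is_RInt_gen.
  apply (filterlimi_lim_ext_loc (fun ab => RInt (fJ K c g) (fst ab) (snd ab))).
  - apply (Filter_prod _ _ _ (fun a => a = c) (fun b => c < b)).
    + reflexivity.
    + exists c. auto.
    + intros a b Ha Hb. simpl. subst a. apply (RInt_correct (V:=R_CompleteNormedModule)).
      apply (ex_RInt_continuous (V:=R_CompleteNormedModule)). intros z Hz.
      rewrite Rmin_left in Hz by lra. apply fJ_cont; lra.
  - apply filterlim_locally. intros eps.
    apply (Filter_prod _ _ _ (fun a => a = c) (fun b => Rmax c (B * c / eps) < b)).
    + reflexivity.
    + exists (Rmax c (B * c / eps)). auto.
    + intros a b Ha Hb. simpl. subst a.
      assert (Hb1 : c < b) by (eapply Rle_lt_trans; [apply Rmax_l| exact Hb]).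
      assert (Hb2 : B * c / eps < b) by (eapply Rle_lt_trans; [apply Rmax_r| exact Hb]).
      change (Rabs (RInt (fJ K c g) c b + - (K * II c g)) < eps).
      eapply Rle_lt_trans. apply Est; auto.
      pose proof (cond_pos eps).
      apply (Rmult_lt_reg_r (b / eps)). apply Rdiv_lt_0_compat; lra.
      replace (B * (c/b) * (b/eps)) with (B * c / eps) by (field; lra).
      replace (eps * (b / eps)) with b by (field; lra). lra.
Qed.

Lemma div_le_div a b d e : 0 < d -> 0 < e -> a * e <= b * d -> a / d <= b / e.
Proof.
  intros Hd He H.
  replace (a/d) with (b/e + (a*e - b*d) * /(d*e)) by (field; lra).
  assert (0 < /(d*e)) by (apply Rinv_0_lt_compat; nra). nra.
Qed.

Lemma RInt_sub01 f a b :
  (forall x, 0 <= x <= 1 -> continuous f x) -> (forall x, 0 <= x <= 1 -> 0 <= f x) ->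
  0 <= a -> a <= b -> b <= 1 -> RInt f a b <= RInt f 0 1.
Proof.
  intros Hc Hp Ha Hab Hb.
  assert (Ex : forall u v, 0 <= u -> u <= v -> v <= 1 -> ex_RInt f u v).
  { intros u v Hu Huv Hv. apply (ex_RInt_continuous (V:=R_CompleteNormedModule)).
    intros z Hz. rewrite Rmin_left in Hz by lra. rewrite Rmax_right in Hz by lra.
    apply Hc; lra. }
  rewrite <- (RInt_Chasles (V:=R_CompleteNormedModule) f 0 a 1) by (apply Ex; lra).
  rewrite <- (RInt_Chasles (V:=R_CompleteNormedModule) f a b 1) by (apply Ex; lra).
  idtac.
  assert (0 <= RInt f 0 a). { apply RInt_ge_0. lra. apply Ex; lra. intros; apply Hp; lra. }
  assert (0 <= RInt f b 1). { apply RInt_ge_0. lra. apply Ex; lra. intros; apply Hp; lra. }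
  unfold plus in *; simpl in *. lra.
Qed.

Lemma den_pos2 c g g0 v : 0 < c -> g <= g0 -> g0 < c -> 0 <= v^2 <= 1 ->
  Rmin c (c-g0) <= c - g*(1-v^2).
Proof.
  intros Hc Hg Hg0 Hv. unfold Rmin; destruct (Rle_dec c (c-g0)); destruct (Rle_dec 0 g); nra.
Qed.

Lemma II_lip c g0 g1 g2 : 0 < c -> g0 < c -> g1 <= g0 -> g2 <= g0 ->
  Rabs (II c g1 - II c g2) <= 2 / (Rmin c (c-g0))^2 * Rabs (g1 - g2).
Proof.
  intros Hc Hg0 H1 H2.
  set (mu := Rmin c (c-g0)).
  assert (Hmu : 0 < mu). { destruct (den_pos c g0 0 Hc Hg0) as [H _]; [simpl; lra| exact H]. }
  unfold II. 
  rewrite <- (RInt_minus (V:=R_CompleteNormedModule)) by (apply hh_ex; lra).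
  replace (2 / mu^2 * Rabs (g1 - g2)) with ((1 - 0) * (2 / mu^2 * Rabs (g1 - g2))) by ring.
  apply abs_RInt_le_const. lra.
  apply (ex_RInt_minus (V:=R_NormedModule)); apply hh_ex; lra.
  intros t Ht.
  assert (Hv : 0 <= t^2 <= 1) by (split; nra).
  pose proof (den_pos2 c g1 g0 t Hc H1 Hg0 Hv) as D1.
  pose proof (den_pos2 c g2 g0 t Hc H2 Hg0 Hv) as D2. fold mu in D1, D2.
  change (Rabs (hh c g1 t - hh c g2 t) <= 2 / mu ^ 2 * Rabs (g1 - g2)).
  replace (hh c g1 t - hh c g2 t) with ((2*t^2*(1-t^2)*(g1-g2)) * /((c - g1*(1-t^2))*(c - g2*(1-t^2))))
    by (unfold hh; field; split; lra).
  set (d1 := c - g1*(1-t^2)) in *. set (d2 := c - g2*(1-t^2)) in *.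
  rewrite Rabs_mult, Rabs_inv, (Rabs_pos_eq (d1*d2)) by nra.
  rewrite (Rabs_mult (2*t^2*(1-t^2))), (Rabs_pos_eq (2*t^2*(1-t^2))) by nra.
  unfold Rdiv. rewrite (Rmult_comm (2 * / mu^2)), Rmult_assoc.
  rewrite (Rmult_comm (2*t^2*(1-t^2))).
  assert (/ (d1*d2) <= / mu^2) by (apply Rinv_le_contravar; nra).
  assert (0 < / (d1*d2)) by (apply Rinv_0_lt_compat; nra).
  pose proof (Rabs_pos (g1-g2)).
  rewrite Rmult_assoc. apply Rmult_le_compat_l. auto.
  assert (0 <= 2*t^2*(1-t^2) <= 2) by nra. nra.
Qed.

Lemma II_nonneg c g : 0 < c -> g < c -> 0 <= II c g.
Proof.
  intros Hc Hg. unfold II. apply RInt_ge_0. lra. apply hh_ex; lra.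
  intros x Hx. apply (hh_bounds c g x Hc Hg). lra.
Qed.

Lemma II_le c g : 0 < c -> 0 <= g < c -> II c g <= 2/c.
Proof.
  intros Hc Hg. unfold II.
  apply Rle_trans with (RInt (fun _ => 2/c) 0 1).
  2: { rewrite (RInt_const (V:=R_CompleteNormedModule)). change (scal ?a ?b) with (a*b). lra. }
  apply RInt_le. lra. apply hh_ex; lra.
  apply (ex_RInt_const (V:=R_NormedModule)).
  intros x Hx. destruct (den_pos c g x Hc (proj2 Hg)) as [H1 H2]. nra.
  assert (0 <= (c-g)*(1-x^2)) by (apply Rmult_le_pos; nra).
  unfold hh. apply div_le_div; nra.
Qed.

Lemma II_gap c d : 0 < c -> 0 < d <= 1/2 ->
  sqrt d / (8*(c+2)^2) <= II c (c-d) - II c (c-2*d).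
Proof.
  intros Hc Hd.
  set (f := fun v => hh c (c-d) v - hh c (c-2*d) v).
  assert (Hf : forall v, 0 <= v <= 1 -> continuous f v).
  { intros v Hv. unfold f, hh.
    destruct (den_pos c (c-d) v Hc) as [A1 A2]; try lra; try (split; nra).
    destruct (den_pos c (c-2*d) v Hc) as [B1 B2]; try lra; try (split; nra).
    apply (ex_derive_continuous (K:=R_AbsRing) (V:=R_NormedModule)). auto_derive. lra. }
  assert (Hfp : forall v, 0 <= v <= 1 -> 0 <= f v).
  { intros v Hv. unfold f, hh.
    destruct (den_pos c (c-d) v Hc) as [A1 A2]; try lra; try (split; nra).
    destruct (den_pos c (c-2*d) v Hc) as [B1 B2]; try lra; try (split; nra).
    assert (2 * v ^ 2 / (c - (c - 2 * d) * (1 - v ^ 2)) <= 2 * v ^ 2 / (c - (c - d) * (1 - v ^ 2))).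
    { assert (0 <= v^2 * d * (1 - v^2)) by (apply Rmult_le_pos; [apply Rmult_le_pos|]; nra).
      apply div_le_div; try lra. } lra. }
  unfold II. rewrite <- (RInt_minus (V:=R_CompleteNormedModule)) by (apply hh_ex; lra).
  change (RInt (fun x => minus (hh c (c - d) x) (hh c (c - 2 * d) x)) 0 1) with (RInt f 0 1).
  set (s := sqrt d).
  assert (Hs : 0 < s) by (apply sqrt_lt_R0; lra).
  assert (Hs2 : s * s = d) by (apply sqrt_sqrt; lra).
  assert (Hs1 : s <= 1) by nra.
  apply Rle_trans with (RInt f (s/2) s).
  2: { apply RInt_sub01; auto; lra. }
  apply Rle_trans with (RInt (fun _ => 1/(4*(c+2)^2)) (s/2) s).
  { rewrite (RInt_const (V:=R_CompleteNormedModule)). change (scal ?a ?b) with (a*b).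
    apply Req_le. field. lra. }
  apply RInt_le. lra. apply (ex_RInt_const (V:=R_NormedModule)).
  apply (ex_RInt_continuous (V:=R_CompleteNormedModule)). intros z Hz.
  rewrite Rmin_left in Hz by lra. rewrite Rmax_right in Hz by lra. apply Hf; lra.
  intros v Hv. unfold f, hh.
  assert (Hv2 : d/4 <= v^2 <= d) by nra.
  replace (c - (c - d) * (1 - v ^ 2)) with (c*v^2 + d*(1-v^2)) by ring.
  replace (c - (c - 2*d) * (1 - v ^ 2)) with (c*v^2 + 2*d*(1-v^2)) by ring.
  assert (P1 : 0 < c*v^2 + d*(1-v^2)) by nra.
  assert (P2 : 0 < c*v^2 + 2*d*(1-v^2)) by nra.
  replace (2 * v ^ 2 / (c*v^2 + d*(1-v^2)) - 2 * v ^ 2 / (c*v^2 + 2*d*(1-v^2)))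
    with ((2*v^2*d*(1-v^2)) / ((c*v^2 + d*(1-v^2)) * (c*v^2 + 2*d*(1-v^2)))).
  2: { field. split; lra. }
  apply div_le_div. nra. nra.
  assert (0 <= c*d + d*(1-v^2)) by nra.
  assert (c * v ^ 2 + d * (1 - v ^ 2) <= (c+1)*d) by nra.
  assert (c * v ^ 2 + 2 * d * (1 - v ^ 2) <= (c+2)*d) by nra.
  assert ((c * v ^ 2 + d * (1 - v ^ 2)) * (c * v ^ 2 + 2 * d * (1 - v ^ 2)) <= (c+1)*(c+2)*(d*d)).
  { apply Rle_trans with (((c+1)*d) * ((c+2)*d)). apply Rmult_le_compat; nra. nra. }
  assert (2 * v ^ 2 * d * (1 - v ^ 2) >= d*d/4) by nra.
  assert (0 < d*d) by nra.
  nra.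
Qed.

Lemma II_neg c T : 0 < c -> 0 < T -> (ln (c+T) - ln c)/(4*T) <= II c (-T).
Proof.
  intros Hc HT.
  assert (Hct : -T < c) by lra.
  assert (Hf : forall v, 0 <= v <= 1 -> continuous (hh c (-T)) v).
  { intros v Hv. apply hh_cont; auto. split; nra. }
  assert (Hfp : forall v, 0 <= v <= 1 -> 0 <= hh c (-T) v).
  { intros v Hv. apply (hh_bounds c (-T) v Hc Hct Hv). }
  unfold II. apply Rle_trans with (RInt (hh c (-T)) (1/2) 1).
  2: { apply RInt_sub01; auto; lra. }
  set (df := fun v => 1/(2*(c+2*T*(1-v)))).
  assert (Hint : is_RInt df (1/2) 1 ((ln (c+T) - ln c)/(4*T))).
  { set (F := fun v => - ln (c+2*T*(1-v)) / (4*T)).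
    replace ((ln (c+T) - ln c)/(4*T)) with (minus (F 1) (F (1/2))).
    2: { unfold F, minus, plus, opp; simpl. replace (c + 2*T*(1-1)) with c by ring.
         replace (c + 2*T*(1-1/2)) with (c+T) by field. field. lra. }
    apply (is_RInt_derive (V:=R_CompleteNormedModule)).
    - intros x Hx. rewrite Rmin_left in Hx by lra. rewrite Rmax_right in Hx by lra.
      unfold F, df. auto_derive. nra. field. split; nra.
    - intros x Hx. rewrite Rmin_left in Hx by lra. rewrite Rmax_right in Hx by lra.
      unfold df. apply (ex_derive_continuous (K:=R_AbsRing) (V:=R_NormedModule)). auto_derive. nra. }
  rewrite <- (is_RInt_unique _ _ _ _ Hint).
  apply RInt_le. lra. eexists; exact Hint.
  apply hh_ex; lra.
  intros v Hv. unfold df, hh.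
  assert (1 - v^2 <= 2*(1-v)) by nra.
  assert (0 <= T*(1-v^2)) by (apply Rmult_le_pos; nra).
  apply div_le_div. nra. lra.
  assert (T*(1-v^2) <= 2*T*(1-v)) by nra.
  assert (4*v^2 >= 1) by nra.
  nra.
Qed.

Lemma Jeq m g : 0 < m -> g < 4*m^2 -> J m g = /(16*PI^2) * II (4*m^2) g.
Proof.
  intros Hm Hg. unfold J, rho.
  apply (Jrep (/(16*PI^2)) (4*m^2) g).
  - apply Rinv_0_lt_compat. pose proof PI_RGT_0. nra.
  - nra.
  - exact Hg.
Qed.

Lemma Jcont m g0 : 0 < m -> g0 < 4*m^2 -> continuity_pt (J m) g0.
Proof.
  intros Hm Hg0. set (c := 4*m^2) in *.
  assert (Hc : 0 < c) by (unfold c; nra).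
  set (K := /(16*PI^2)).
  assert (HK : 0 < K). { apply Rinv_0_lt_compat. pose proof PI_RGT_0. nra. }
  set (g1 := (g0+c)/2).
  set (L := 2 / (Rmin c (c-g1))^2).
  assert (HL : 0 <= L).
  { unfold L. destruct (den_pos c g1 0 Hc) as [H _]; [unfold g1; lra| simpl; lra|].
    unfold Rdiv. apply Rmult_le_pos. lra. left; apply Rinv_0_lt_compat; nra. }
  unfold continuity_pt, continue_in, limit1_in, limit_in. intros eps Heps.
  exists (Rmin ((c-g0)/2) (eps/(K*L+1))). split.
  { apply Rmin_glb_lt. lra. apply Rdiv_lt_0_compat. lra. nra. }
  intros x [_ Hx]. simpl in *. unfold R_dist in *.
  assert (Hx1 : Rabs (x - g0) < (c-g0)/2) by (eapply Rlt_le_trans; [exact Hx| apply Rmin_l]).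
  assert (Hx2 : Rabs (x - g0) < eps/(K*L+1)) by (eapply Rlt_le_trans; [exact Hx| apply Rmin_r]).
  apply Rabs_def2 in Hx1. destruct Hx1 as [Hx1a Hx1b].
  assert (Hxc : x < c) by lra. rewrite (Jeq m x), (Jeq m g0) by auto. fold c K.
  change (/(16*PI^2)) with K. change (4*m^2) with c.
  replace (K * II c x - K * II c g0) with (K * (II c x - II c g0)) by ring.
  rewrite Rabs_mult, (Rabs_pos_eq K) by lra.
  pose proof (II_lip c g1 x g0 Hc) as HH. fold L in HH.
  assert (HH' : Rabs (II c x - II c g0) <= L * Rabs (x - g0)) by (apply HH; unfold g1; lra).
  pose proof (Rabs_pos (x-g0)).
  assert (Habs: Rabs (x-g0) * (K*L+1) < eps).
  { apply Rmult_lt_reg_r with (/(K*L+1)). apply Rinv_0_lt_compat; nra.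
    rewrite Rmult_assoc, Rinv_r by nra. rewrite Rmult_1_r. exact Hx2. }
  assert (K * Rabs (II c x - II c g0) <= K * (L * Rabs (x - g0))) by (apply Rmult_le_compat_l; lra).
  nra.
Qed.

Lemma poly_diff a1 a2 c u w : 0 <= u <= c -> 0 <= w <= c ->
  Rabs (u*(a1-u)*(a2-u) - w*(a1-w)*(a2-w)) <=
  (3*c^2 + 2*Rabs (a1+a2)*c + Rabs (a1*a2)) * Rabs (u-w).
Proof.
  intros Hu Hw.
  replace (u*(a1-u)*(a2-u) - w*(a1-w)*(a2-w)) with
    ((u-w) * (u^2+u*w+w^2 - (a1+a2)*(u+w) + a1*a2)) by ring.
  rewrite Rabs_mult, Rmult_comm. apply Rmult_le_compat_r. apply Rabs_pos.
  apply Rabs_le.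
  pose proof (Rle_abs (a1+a2)). pose proof (Rle_abs (-(a1+a2))). rewrite Rabs_Ropp in H0.
  pose proof (Rle_abs (a1*a2)). pose proof (Rle_abs (-(a1*a2))). rewrite Rabs_Ropp in H2.
  assert ((a1+a2)*(u+w) <= Rabs (a1+a2) * (2*c)) by nra.
  assert (-((a1+a2)*(u+w)) <= Rabs (a1+a2) * (2*c)) by nra.
  split; nra.
Qed.

Lemma poly_bound a1 a2 c g : 0 <= g <= c ->
  Rabs (g*(a1-g)*(a2-g)) <= c*(Rabs a1 + c)*(Rabs a2 + c).
Proof.
  intros Hg. rewrite !Rabs_mult.
  assert (Rabs (a1-g) <= Rabs a1 + c).
  { unfold Rminus. eapply Rle_trans. apply Rabs_triang. rewrite Rabs_Ropp, (Rabs_pos_eq g) by lra. lra. }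
  assert (Rabs (a2-g) <= Rabs a2 + c).
  { unfold Rminus. eapply Rle_trans. apply Rabs_triang. rewrite Rabs_Ropp, (Rabs_pos_eq g) by lra. lra. }
  rewrite (Rabs_pos_eq g) by lra.
  apply Rmult_le_compat. apply Rmult_le_pos; [lra|apply Rabs_pos]. apply Rabs_pos.
  apply Rmult_le_compat; try lra; apply Rabs_pos. auto.
Qed.

Lemma aff_cont a b t : continuity_pt (fun s => a + s*b) t.
Proof.
  apply continuity_pt_plus. apply continuity_pt_const. intros ? ?; auto.
  apply continuity_pt_mult. apply continuity_pt_id. apply continuity_pt_const. intros ? ?; auto.
Qed.

Lemma cont_comp_aff (f : R -> R) a b t :
  continuity_pt f (a + t*b) -> continuity_pt (fun s => f (a + s*b)) t.
Proof.
  intros H. exact (continuity_pt_comp (fun s => a + s*b) f t (aff_cont a b t) H).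
Qed.

Lemma lerp_lt a0 b0 a1 b1 t : 0 <= t <= 1 -> a0 < b0 -> a1 < b1 ->
  a0 + t*(a1-a0) < b0 + t*(b1-b0).
Proof.
  intros Ht H0 H1.
  destruct (Rle_lt_dec (b0-a0) (b1-a1)).
  - assert (t * ((b1-a1) - (b0-a0)) >= 0) by nra. nra.
  - assert ((1-t) * ((b0-a0) - (b1-a1)) >= 0) by nra. nra.
Qed.

Lemma collinear_IVT (F : R -> R) (c x0 y0 z0 x1 y1 z1 : R) :
  x0 < y0 -> y0 < z0 -> z0 < c -> x1 < y1 -> y1 < z1 -> z1 < c ->
  (forall g, g < c -> continuity_pt F g) ->
  0 < F y0 * (z0 - x0) - F x0 * (z0 - y0) - F z0 * (y0 - x0) ->
  F y1 * (z1 - x1) - F x1 * (z1 - y1) - F z1 * (y1 - x1) < 0 ->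
  exists x y z, x < y /\ y < z /\ z < c /\
    F y * (z - x) - F x * (z - y) - F z * (y - x) = 0.
Proof.
  intros H1 H2 H3 H4 H5 H6 HF HQ0 HQ1.
  set (phi := fun t => F (y0 + t*(y1-y0)) * ((z0 + t*(z1-z0)) - (x0 + t*(x1-x0)))
     - F (x0 + t*(x1-x0)) * ((z0 + t*(z1-z0)) - (y0 + t*(y1-y0)))
     - F (z0 + t*(z1-z0)) * ((y0 + t*(y1-y0)) - (x0 + t*(x1-x0)))).
  assert (Hord : forall t, 0 <= t <= 1 ->
     x0 + t*(x1-x0) < y0 + t*(y1-y0) /\ y0 + t*(y1-y0) < z0 + t*(z1-z0) /\ z0 + t*(z1-z0) < c).
  { intros t Ht. split; [|split]; try (apply lerp_lt; auto).
    replace c with (c + t*(c-c)) by ring. apply lerp_lt; auto. }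
  destruct (Ranalysis5.IVT_interv (fun t => - phi t) 0 1) as [t [Ht Hphi]].
  - intros t Ht. destruct (Hord t Ht) as [o1 [o2 o3]].
    apply continuity_pt_opp. unfold phi.
    apply continuity_pt_minus; [apply continuity_pt_minus|];
      (apply continuity_pt_mult; [apply cont_comp_aff; apply HF; lra | apply continuity_pt_minus; apply aff_cont]).
  - lra.
  - unfold phi. rewrite !Rmult_0_l, !Rplus_0_r. lra.
  - unfold phi. replace (x0 + 1*(x1-x0)) with x1 by ring.
    replace (y0 + 1*(y1-y0)) with y1 by ring. replace (z0 + 1*(z1-z0)) with z1 by ring. lra.
  - destruct (Hord t Ht) as [o1 [o2 o3]].
    exists (x0 + t*(x1-x0)), (y0 + t*(y1-y0)), (z0 + t*(z1-z0)).
    repeat split; try lra. unfold phi in Hphi. lra.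
Qed.

Theorem proposition4p9 (m a1 a2 : R) :
  0 < m -> a1 < 4 * m ^ 2 -> a2 < 4 * m ^ 2 ->
  forall b2 : R, exists b0 b1 : R, exists g0 g1 g2 : R,
    g0 <> g1 /\ g0 <> g2 /\ g1 <> g2 /\
    g0 < 4 * m ^ 2 /\ g1 < 4 * m ^ 2 /\ g2 < 4 * m ^ 2 /\
    g0 * (a1 - g0) * (a2 - g0) * J m g0 = b0 + b1 * g0 + b2 * g0 ^ 2 /\
    g1 * (a1 - g1) * (a2 - g1) * J m g1 = b0 + b1 * g1 + b2 * g1 ^ 2 /\
    g2 * (a1 - g2) * (a2 - g2) * J m g2 = b0 + b1 * g2 + b2 * g2 ^ 2.
Proof.
  intros Hm Ha1 Ha2 b2.
  set (c := 4*m^2) in *.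
  assert (Hc : 0 < c) by (unfold c; nra).
  set (K := /(16*PI^2)).
  assert (HK : 0 < K). { apply Rinv_0_lt_compat. pose proof PI_RGT_0. nra. }
  assert (JE : forall g, g < c -> J m g = K * II c g) by (intros g Hg; apply Jeq; auto).
  set (F := fun g => g*(a1-g)*(a2-g)*J m g - b2*g^2).
  assert (HF : forall g, g < c -> continuity_pt F g).
  { intros g Hg. unfold F. apply continuity_pt_minus.
    - apply continuity_pt_mult. 
      + repeat apply continuity_pt_mult; try apply continuity_pt_id;
        apply continuity_pt_minus; try apply continuity_pt_id; apply continuity_pt_const; intros ? ?; auto.
      + apply Jcont; auto.
    - apply continuity_pt_mult. apply continuity_pt_const; intros ? ?; auto.
      simpl. repeat apply continuity_pt_mult; try apply continuity_pt_id.
      apply continuity_pt_const; intros ? ?; auto. }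
  assert (P1 : exists T, 0 < T /\
     0 < F 0 * (c/2 - -T) - F (-T) * (c/2 - 0) - F (c/2) * (0 - -T)).
  { set (A := Rabs (F (c/2))).
    set (S := Rabs b2 + 2*A/c + 1).
    assert (HS : 1 <= S). { pose proof (Rabs_pos b2). assert (0 <= 2*A/c). { unfold Rdiv. apply Rmult_le_pos. unfold A; pose proof (Rabs_pos (F (c/2))); lra. left; apply Rinv_0_lt_compat; lra. } unfold S; lra. }
    set (N := 16*S/K).
    set (T := c*exp N + 2*(Rabs a1 + Rabs a2) + 1).
    pose proof (exp_pos N) as HeN. pose proof (Rabs_pos a1). pose proof (Rabs_pos a2).
    pose proof (Rle_abs (-a1)). pose proof (Rle_abs (-a2)). rewrite Rabs_Ropp in *.
    assert (HT1 : 1 <= T) by (unfold T; nra).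
    exists T. split. lra.
    assert (HII : (ln (c+T) - ln c)/(4*T) <= II c (-T)) by (apply II_neg; lra).
    assert (Hln : N <= ln (c+T) - ln c).
    { assert (ln (c * exp N) <= ln (c+T)). { apply ln_le. nra. unfold T. nra. }
      rewrite ln_mult, ln_exp in H3 by lra. lra. }
    assert (HW : 4*S/T <= K * II c (-T)).
    { apply Rle_trans with (K * ((ln (c+T) - ln c)/(4*T))).
      - replace (4*S/T) with (K * (N/(4*T))) by (unfold N; field; split; lra).
        apply Rmult_le_compat_l. lra. unfold Rdiv. apply Rmult_le_compat_r.
        left; apply Rinv_0_lt_compat; lra. lra.
      - apply Rmult_le_compat_l; lra. }
    assert (EFT : F (-T) = - T * ((a1+T)*(a2+T)) * (K * II c (-T)) - b2*T^2).
    { unfold F. rewrite JE by lra. ring. }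
    assert (EF0 : F 0 = 0) by (unfold F; ring).
    rewrite EFT, EF0.
    set (W := K * II c (-T)) in *.
    assert (HPp : T^2/4 <= (a1+T)*(a2+T)).
    { assert (T/2 <= a1 + T) by (unfold T in *; nra). assert (T/2 <= a2 + T) by (unfold T in *; nra).
      replace (T^2/4) with ((T/2)*(T/2)) by field. apply Rmult_le_compat; lra. }
    assert (HPW : T * S <= (a1+T)*(a2+T) * W).
    { apply Rle_trans with ((T^2/4) * (4*S/T)). right; field; lra.
      assert (0 <= T^2/4) by (unfold Rdiv; apply Rmult_le_pos; [nra| lra]).
      assert (0 <= 4*S/T) by (unfold Rdiv; apply Rmult_le_pos; [lra| left; apply Rinv_0_lt_compat; lra]).
      apply Rmult_le_compat; lra. }
    assert (HA : F (c/2) <= A) by apply Rle_abs.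
    pose proof (Rle_abs (-b2)). rewrite Rabs_Ropp in H3.
    assert (HSA : c/2 * S = c/2 * Rabs b2 + A + c/2) by (unfold S; field; lra).
    assert (0 <= A) by (unfold A; apply Rabs_pos).
    assert (T * (T*S) <= T * ((a1+T)*(a2+T)*W)) by (apply Rmult_le_compat_l; lra).
    assert (0 <= T*A*(T-1)) by (apply Rmult_le_pos; [apply Rmult_le_pos|]; lra).
    assert (T*A <= T*T*A) by nra.
    assert (h1 : (c/2)*(T*(T*S)) <= (c/2)*(T*((a1+T)*(a2+T)*W))) by (apply Rmult_le_compat_l; lra).
    assert (h2 : (c/2)*(T*(T*S)) = T*T*(c/2*S)) by ring.
    assert (h3 : (c/2*T^2)*(-b2) <= (c/2*T^2)*Rabs b2) by (apply Rmult_le_compat_l; [left; apply Rmult_lt_0_compat; [lra| apply pow_lt; lra]|lra]).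
    assert (h4 : T*F(c/2) <= T*A) by (apply Rmult_le_compat_l; lra).
    assert (h5 : 0 < c/2*T^2) by (apply Rmult_lt_0_compat; [lra| apply pow_lt; lra]).
    rewrite HSA in h2.
    lra. }
  assert (P2 : exists d, 0 < d <= c/8 /\
     F (c-2*d) * ((c-d) - c/2) - F (c/2) * ((c-d) - (c-2*d)) - F (c-d) * ((c-2*d) - c/2) < 0).
  { set (pc := c*(a1-c)*(a2-c)).
    assert (Hpc : 0 < pc). { assert (0 < (a1-c)*(a2-c)) by nra. unfold pc; rewrite Rmult_assoc; apply Rmult_lt_0_compat; lra. }
    set (Lp := 3*c^2 + 2*Rabs (a1+a2)*c + Rabs (a1*a2)).
    assert (HLp : 0 <= Lp).
    { unfold Lp. pose proof (Rabs_pos (a1+a2)). pose proof (Rabs_pos (a1*a2)).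
      assert (0 <= Rabs (a1+a2) * c) by (apply Rmult_le_pos; lra). nra. }
    pose proof (Rabs_pos b2) as Hb2.
    set (al := K*(pc/2)/(8*(c+2)^2)).
    assert (Hal : 0 < al).
    { unfold al. apply Rdiv_lt_0_compat. apply Rmult_lt_0_compat; lra. apply Rmult_lt_0_compat. lra. apply pow_lt; lra. }
    set (e1 := K*Lp*(2/c) + 2*c*Rabs b2).
    assert (He1 : 0 <= e1).
    { unfold e1. assert (0 <= K*Lp*(2/c)). { apply Rmult_le_pos. apply Rmult_le_pos; lra. unfold Rdiv. apply Rmult_le_pos. lra. left; apply Rinv_0_lt_compat; lra. } nra. }
    set (Bp := c*(Rabs a1 + c)*(Rabs a2 + c)).
    set (B := K*Bp*(2/c) + Rabs b2 * c^2).
    assert (HB : 0 <= B).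
    { unfold B, Bp. pose proof (Rabs_pos a1). pose proof (Rabs_pos a2).
      assert (0 <= c*(Rabs a1 + c)*(Rabs a2 + c)) by (apply Rmult_le_pos; [apply Rmult_le_pos|]; lra).
      assert (0 <= K*(c*(Rabs a1 + c)*(Rabs a2 + c))*(2/c)).
      { apply Rmult_le_pos. apply Rmult_le_pos; lra. unfold Rdiv. apply Rmult_le_pos. lra. left; apply Rinv_0_lt_compat; lra. }
      assert (0 <= Rabs b2 * c^2) by (apply Rmult_le_pos; [lra| apply pow_le; lra]). lra. }
    set (be := c/2*e1 + 2*B).
    assert (Hbe : 0 <= be) by (unfold be; nra).
    set (r := c/8*al/(be+1)).
    assert (Hr : 0 < r). { unfold r. apply Rdiv_lt_0_compat. nra. lra. }
    set (d := Rmin (Rmin (1/2) (c/8)) (Rmin (pc/(4*(Lp+1))) (r^2))).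
    assert (Hd0 : 0 < d).
    { unfold d. apply Rmin_glb_lt; apply Rmin_glb_lt; try lra.
      apply Rdiv_lt_0_compat; lra. apply pow_lt; lra. }
    assert (Hd1 : d <= 1/2) by (unfold d; eapply Rle_trans; [apply Rmin_l| apply Rmin_l]).
    assert (Hd2 : d <= c/8) by (unfold d; eapply Rle_trans; [apply Rmin_l| apply Rmin_r]).
    assert (Hd3 : d <= pc/(4*(Lp+1))) by (unfold d; eapply Rle_trans; [apply Rmin_r| apply Rmin_l]).
    assert (Hd4 : d <= r^2) by (unfold d; eapply Rle_trans; [apply Rmin_r| apply Rmin_r]).
    set (sd := sqrt d).
    assert (Hsd : 0 < sd) by (apply sqrt_lt_R0; lra).
    assert (Hsd2 : sd * sd = d) by (apply sqrt_sqrt; lra).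
    assert (Hsdr : sd <= r). { unfold sd. rewrite <- (sqrt_pow2 r) by lra. apply sqrt_le_1_alt. lra. }
    exists d. split. lra.
    set (x := c/2). set (y := c-2*d). set (z := c-d).
    assert (Hy : 0 <= y < c) by (unfold y; lra).
    assert (Hz : 0 <= z < c) by (unfold z; lra).
    assert (Hx : 0 <= x < c) by (unfold x; lra).
    assert (FB : forall g, 0 <= g < c -> Rabs (F g) <= B).
    { intros g Hg. unfold F. rewrite JE by lra.
      pose proof (II_nonneg c g Hc (proj2 Hg)). pose proof (II_le c g Hc Hg).
      pose proof (poly_bound a1 a2 c g (conj (proj1 Hg) (Rlt_le _ _ (proj2 Hg)))) as PB. fold Bp in PB.
      unfold Rminus at 1. eapply Rle_trans. apply Rabs_triang.
      rewrite Rabs_Ropp. unfold B. apply Rplus_le_compat.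
      - replace (g * (a1 - g) * (a2 - g) * (K * II c g)) with ((g * (a1 - g) * (a2 - g)) * K * II c g) by ring.
        set (pp := g * (a1 - g) * (a2 - g)) in *.
        rewrite !Rabs_mult, (Rabs_pos_eq K), (Rabs_pos_eq (II c g)) by lra.
        pose proof (Rabs_pos pp).
        replace (K*Bp*(2/c)) with (Bp*K*(2/c)) by ring.
        apply Rmult_le_compat; try lra. apply Rmult_le_pos; lra.
        apply Rmult_le_compat_r; lra.
      - rewrite Rabs_mult, (Rabs_pos_eq (g^2)) by (apply pow_le; lra).
        apply Rmult_le_compat_l. lra. apply pow_incr; lra. }
    assert (FBx := FB x Hx). assert (FBy := FB y Hy).
    apply Rabs_le_between in FBx. apply Rabs_le_between in FBy.
    assert (HG : sd/(8*(c+2)^2) <= II c z - II c y) by (apply II_gap; lra).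
    assert (Hpy : pc/2 <= y*(a1-y)*(a2-y)).
    { pose proof (poly_diff a1 a2 c y c ltac:(lra) ltac:(lra)) as PD. fold Lp in PD.
      fold pc in PD.
      replace (y - c) with (-(2*d)) in PD by (unfold y; ring). rewrite Rabs_Ropp, (Rabs_pos_eq (2*d)) in PD by lra.
      apply Rabs_le_between in PD.
      assert (Lp*(2*d) <= pc/2).
      { apply Rle_trans with (Lp * (2*(pc/(4*(Lp+1))))). apply Rmult_le_compat_l; lra.
        apply (Rmult_le_reg_r (Lp+1)). lra. replace (Lp * (2 * (pc / (4 * (Lp + 1)))) * (Lp + 1)) with (Lp * pc / 2) by (field; lra).
        nra. }
      lra. }
    assert (Hpyz : Rabs (y*(a1-y)*(a2-y) - z*(a1-z)*(a2-z)) <= Lp * d).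
    { pose proof (poly_diff a1 a2 c y z ltac:(lra) ltac:(lra)) as PD. fold Lp in PD.
      replace (y - z) with (-d) in PD by (unfold y, z; ring). rewrite Rabs_Ropp, (Rabs_pos_eq d) in PD by lra. exact PD. }
    apply Rabs_le_between in Hpyz.
    assert (IIz0 := II_nonneg c z Hc (proj2 Hz)). assert (IIz1 := II_le c z Hc Hz).
    set (py := y*(a1-y)*(a2-y)) in *. set (pz := z*(a1-z)*(a2-z)) in *.
    assert (ED : F y - F z = K*(py*(II c y - II c z) + (py - pz)*II c z) - b2*(y-z)*(y+z)).
    { unfold F. rewrite (JE y), (JE z) by lra. unfold py, pz. ring. }
    assert (D1 : K*(py*(II c y - II c z)) <= - (al * sd)).
    { replace (al*sd) with (K * ((pc/2) * (sd/(8*(c+2)^2)))) by (unfold al; field; lra).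
      rewrite Ropp_mult_distr_r. apply Rmult_le_compat_l. lra.
      assert (0 <= sd / (8 * (c + 2) ^ 2)) by (apply Rmult_le_pos; [lra|left; apply Rinv_0_lt_compat; apply Rmult_lt_0_compat; [lra| apply pow_lt; lra]]).
      assert ((pc/2) * (sd/(8*(c+2)^2)) <= py * (II c z - II c y)) by (apply Rmult_le_compat; lra).
      lra. }
    assert (D2 : K*((py - pz)*II c z) <= K*Lp*(2/c)*d).
    { assert ((py-pz)*II c z <= (Lp*d)*(2/c)).
      { destruct (Rle_dec 0 (py-pz)).
        - apply Rmult_le_compat; lra.
        - assert ((py-pz)*II c z <= 0) by nra. assert (0 <= Lp*d*(2/c)).
          { apply Rmult_le_pos. nra. unfold Rdiv. apply Rmult_le_pos. lra. left; apply Rinv_0_lt_compat; lra. } lra. }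
      replace (K*Lp*(2/c)*d) with (K*((Lp*d)*(2/c))) by ring. apply Rmult_le_compat_l; lra. }
    assert (D3 : - (b2*(y-z)*(y+z)) <= 2*c*Rabs b2 * d).
    { replace (- (b2*(y-z)*(y+z))) with (b2*(d*(y+z))) by (unfold y, z; ring).
      pose proof (Rle_abs b2) as Hab1.  pose proof (Rle_abs (-b2)) as Hab2. rewrite Rabs_Ropp in Hab2.
      assert (0 <= d*(y+z) <= d*(2*c)) by (split; nra).
      nra. }
    assert (HD : F y - F z <= - (al*sd) + e1*d) by (unfold e1; rewrite ED; lra).
    assert (Hyx : c/4 <= y - x <= c/2) by (unfold x, y; lra).
    assert (Q1 : (F y - F z) * (y - x) <= - (c/4)*(al*sd) + (c/2)*(e1*d)).
    { assert ((F y - F z)*(y-x) <= (- (al*sd) + e1*d)*(y-x)) by (apply Rmult_le_compat_r; lra).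
      assert (al*sd*(c/4) <= al*sd*(y-x)) by (apply Rmult_le_compat_l; nra).
      assert (e1*d*(y-x) <= e1*d*(c/2)) by (apply Rmult_le_compat_l; nra).
      nra. }
    assert (Hbe2 : be * d <= (c/8)*al*sd).
    { rewrite <- Hsd2. assert (be*sd <= be*r) by (apply Rmult_le_compat_l; lra).
      assert (be*r <= c/8*al).
      { unfold r. apply (Rmult_le_reg_r (be+1)). lra. replace (be * (c / 8 * al / (be + 1)) * (be + 1)) with (be*(c/8*al)) by (field; lra). nra. }
      nra. }
    replace (F y * (z - x) - F x * (z - y) - F z * (y - x)) with ((F y - F z)*(y-x) + d*(F y - F x)) by (unfold z, y; ring).
    assert (d*(F y - F x) <= d*(2*B)) by (apply Rmult_le_compat_l; lra).
    assert (0 < c/8*al*sd) by (apply Rmult_lt_0_compat; [apply Rmult_lt_0_compat; lra|lra]).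
    unfold be in Hbe2. lra. }
  destruct P1 as [T [HT HQ1]]. destruct P2 as [d [Hd HQ2]].
  destruct (collinear_IVT F c (-T) 0 (c/2) (c/2) (c-2*d) (c-d)) as [x [y [z [Hxy [Hyz [Hzc HQ]]]]]];
    try lra; auto.
  set (b1 := (F z - F x)/(z-x)). set (b0 := F x - b1*x).
  assert (EF : forall g, g*(a1-g)*(a2-g)*J m g = F g + b2*g^2) by (intros; unfold F; ring).
  exists b0, b1, x, y, z.
  repeat split; try lra; rewrite EF; unfold b0, b1.
  - field. lra.
  - apply (Rmult_eq_reg_r (z-x)); [|lra]. field_simplify; [|lra]. lra.
  - field. lra.
Qed.
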